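(* Let $p$ be a prime, $q=p^l$, $m\ge1$, $n=2m$. Let $r=\rho(q-1)$ with $0\leqslant\rho\leqslant n-1$ and $\rho=2\rho'$ even, and let $I\subseteq M_r$ with $0\in I$. Let $V$ be an $\mathbb{F}_{q^2}$-subspace of $\mathbb{F}_{q^n}$ of dimension $m-\rho'$ over $\mathbb{F}_{q^2}$ and $\lambda\in\mathbb{F}_q^*$. Then the vector $x=(x_g)_{g\in\mathbb{F}_{q^n}^*}$ with $x_g=\lambda$ for $g\in V\setminus\{0\}$ and $x_g=0$ otherwise belongs to $\mathcal{C}_q(r,I,n)^*$.
   Context: Let $N=q^n-1$ and $\alpha$ a primitive element of $\mathbb{F}_{q^n}$. Every integer $0\le u\le q^n-1$ is written $u=\sum_{i=0}^{n-1}u_iq^i$, $u_i\in\{0,\dots,q-1\}$; $\mathrm{wt}_q(u)=\sum u_i$, $O(u)=\sum_{i\text{ odd}}u_i$, $E(u)=\sum_{i\text{ even}}u_i$. For $-1\le r<n(q-1)$, $Z_r=\{\alpha^u\mid 0<u\le q^n-1,\ \mathrm{wt}_q(u)\le n(q-1)-r-1\}$. For $0\le r\le n(q-1)$ and integer $k\ge0$, $\Theta^{(r)}_k=\{\alpha^u\mid 0\le u\le q^n-1,\ \mathrm{wt}_q(u)=n(q-1)-r,\ |O(u)-E(u)|=k\}$. $M_r$ is the set of even (resp. odd) integers $k\in[0,m(q-1)]$ when $r$ is even (resp. odd). For $I\subseteq M_r$: $\overline I=M_r\setminus I$, $Z_{r,I}=Z_r\cup\bigcup_{k\in\overline I}\Theta^{(r)}_k$.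 $\mathcal{C}_q(r,I,n)^*$ is the cyclic code of length $N$ over $\mathbb{F}_q$ with coordinates indexed by $\mathbb{F}_{q^n}^*$ consisting of all $x=(x_g)$ with $\sum_g x_g g^{u}=0$ for every $u\in[1,N]$ with $\alpha^u\in Z_{r,I}$. *)

(* Defs.v *)
From mathcomp Require Import all_boot all_order all_algebra all_field.
Set Implicit Arguments. Unset Strict Implicit. Unset Printing Implicit Defensive.
Import GRing.Theory.
Local Open Scope ring_scope.

Definition qdigit (q u i : nat) : nat := ((u %/ q ^ i) %% q)%N.
Definition wtq (q n u : nat) : nat := (\sum_(i < n) qdigit q u i)%N.
Definition Oq (q n u : nat) : nat := (\sum_(i < n | odd i) qdigit q u i)%N.
Definition Eq (q n u : nat) : nat := (\sum_(i < n | ~~ odd i) qdigit q u i)%N.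
Definition absdiff (a b : nat) : nat := ((a - b) + (b - a))%N.

Section Code.
Variables (L : finFieldType) (q n m : nat) (alpha : L).

Definition inZ (r : nat) (y : L) : bool :=
  [exists u : 'I_(q ^ n).+1,
     [&& (0 < u)%N, (u <= q ^ n - 1)%N,
         (wtq q n u <= n * (q - 1) - r - 1)%N & alpha ^+ u == y]].

Definition inTheta (r k : nat) (y : L) : bool :=
  [exists u : 'I_(q ^ n).+1,
     [&& (u <= q ^ n - 1)%N, wtq q n u == (n * (q - 1) - r)%N,
         absdiff (Oq q n u) (Eq q n u) == k & alpha ^+ u == y]].

Definition Mr (r : nat) : pred nat :=
  fun k => (k <= m * (q - 1))%N && (odd k == odd r).

Definition inZrI (r : nat) (I : pred nat) (y : L) : bool :=
  inZ r y ||
  [exists k : 'I_(m * (q - 1)).+1,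
     [&& Mr r (val k), (val k) \notin I & inTheta r (val k) y]].

(* C_q(r,I,n)^* : words (x_g)_{g in F_{q^n}^*} over F_q (x g^q = x g)
   with sum_{g != 0} x_g g^u = 0 for all u in [1,N] with alpha^u in Z_{r,I}.
   Coordinates are indexed by nonzero g; the value x 0 is irrelevant. *)
Definition in_code (r : nat) (I : pred nat) (x : L -> L) : Prop :=
  (forall g : L, g != 0 -> x g ^+ q = x g) /\
  (forall u : nat, (1 <= u <= q ^ n - 1)%N -> inZrI r I (alpha ^+ u) ->
     \sum_(g : L | g != 0) x g * g ^+ u = 0).

End Code.

Definition Fq2_subspace (L : finFieldType) (q : nat) (V : {set L}) : Prop :=
  [/\ 0 \in V,
      (forall v w, v \in V -> w \in V -> v + w \in V) &
      (forall c v, c ^+ (q ^ 2) = c -> v \in V -> c * v \in V)].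

(* Main.v *)
Require Import Defs.
From mathcomp Require Import all_boot all_order all_algebra all_field.
From mathcomp Require Import ring zify.
Import GRing.Theory.
Local Open Scope ring_scope.

Section Gen.
Variables (L : finFieldType) (Q : nat).
Hypothesis Q_gt0 : (0 < Q)%N.
Hypothesis frobQ : forall x y : L, (x + y) ^+ Q = x ^+ Q + y ^+ Q.

Definition KQ : {set L} := [set c | c ^+ Q == c].

Lemma Q_neq0 : (Q == 0%N) = false. Proof. by move: Q_gt0; rewrite lt0n => /negPf. Qed.
Lemma KQ0 : 0 \in KQ. Proof. by rewrite inE expr0n Q_neq0. Qed.
Lemma KQ1 : 1 \in KQ. Proof. by rewrite inE expr1n. Qed.
Lemma KQD c d : c \in KQ -> d \in KQ -> c + d \in KQ.
Proof. by rewrite !inE frobQ => /eqP-> /eqP->. Qed.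
Lemma KQM c d : c \in KQ -> d \in KQ -> c * d \in KQ.
Proof. by rewrite !inE exprMn => /eqP-> /eqP->. Qed.
Lemma KQN c : c \in KQ -> - c \in KQ.
Proof.
rewrite !inE => /eqP Hc; apply/eqP.
have := frobQ c (- c); rewrite subrr expr0n Q_neq0 Hc => /eqP.
by rewrite eq_sym addrC addr_eq0 => /eqP.
Qed.
Lemma KQV c : c \in KQ -> c^-1 \in KQ.
Proof. by rewrite !inE exprVn => /eqP->. Qed.

Fixpoint span (bs : seq L) : {set L} :=
  if bs is b :: bs' then [set (x.1 * b + x.2) | x in setX KQ (span bs')]
  else [set 0].

Fixpoint indep (bs : seq L) : bool :=
  if bs is b :: bs' then (b \notin span bs') && indep bs' else true.

Lemma span_cons b bs y :
  reflect (exists c w, [/\ c \in KQ, w \in span bs & y = c * b + w])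
          (y \in span (b :: bs)).
Proof.
apply: (iffP imsetP) => [[[c w]] /= /setXP [Hc Hw] ->|[c [w [Hc Hw ->]]]].
  by exists c, w.
by exists (c, w) => //; apply/setXP.
Qed.

Lemma span_closed bs :
  [/\ 0 \in span bs,
      {in span bs &, forall x y, x + y \in span bs} &
      forall c x, c \in KQ -> x \in span bs -> c * x \in span bs].
Proof.
elim: bs => [|b bs [H0 HD HM]] /=.
  split; first by rewrite inE.
    by move=> x y; rewrite !inE => /eqP-> /eqP->; rewrite addr0.
  by move=> c x _; rewrite !inE => /eqP->; rewrite mulr0.
split.
- by apply/span_cons; exists 0, 0; split => //; [exact: KQ0| rewrite mul0r addr0].
- move=> x y /span_cons [c [w [Hc Hw ->]]] /span_cons [c' [w' [Hc' Hw' ->]]].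
  apply/span_cons; exists (c + c'), (w + w'); split.
  + exact: KQD.
  + exact: HD.
  + by rewrite mulrDl; rewrite -!addrA; congr (_ + _); rewrite addrCA.
- move=> c0 x Hc0 /span_cons [c [w [Hc Hw ->]]].
  apply/span_cons; exists (c0 * c), (c0 * w); split.
  + exact: KQM.
  + exact: HM.
  + by rewrite mulrDr mulrA.
Qed.

Lemma span_inj b bs : b \notin span bs ->
  {in setX KQ (span bs) &, injective (fun x => x.1 * b + x.2)}.
Proof.
move=> Hb [c w] [c' w'] /setXP [/= Hc Hw] /setXP [/= Hc' Hw'] /= E.
have [Hcc|Hcc] := eqVneq c c'.
  by subst c'; move/addrI: E => ->.
case/negP: Hb.
have [H0 HD HM] := span_closed bs.
have -> : b = (c - c')^-1 * (w' + (-1) * w).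
  apply: (mulfI (x := c - c')); first by rewrite subr_eq0.
  rewrite mulrA mulfV ?subr_eq0 // mul1r mulrBl.
  have E2 : c * b = c' * b + w' - w by rewrite -E addrK.
  by rewrite E2; ring.
apply: (HM); first by apply: KQV; apply: KQD => //; exact: KQN.
apply: (HD) => //; apply: (HM) => //; apply: KQN; exact: KQ1.
Qed.

Hypothesis cardK : #|KQ| = Q.

Lemma card_span bs : indep bs -> #|span bs| = (Q ^ size bs)%N.
Proof.
elim: bs => [|b bs IH] /=; first by rewrite cards1.
case/andP => Hb Hi.
by rewrite card_in_imset ?cardsX ?IH ?cardK ?expnS //; exact: span_inj.
Qed.


Definition linK (f : L -> L) :=
  (forall x y, f (x + y) = f x + f y) /\
  (forall c x, c \in KQ -> f (c * x) = c * f x).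
Fixpoint alllin (fs : seq (L -> L)) : Prop :=
  if fs is f :: fs' then linK f /\ alllin fs' else True.

Hypothesis sumK : forall k, (k < Q - 1)%N -> \sum_(c in KQ) c ^+ k = 0.

Lemma Hstep b bs n
  (IH : forall gs : seq (L -> L), alllin gs -> (size gs < n * (Q - 1))%N ->
          \sum_(w in span bs) \prod_(g <- gs) g w = 0) :
  forall (fs gs : seq (L -> L)) k, alllin fs -> alllin gs -> (size gs + size fs + k < n.+1 * (Q - 1))%N ->
  \sum_(c in KQ) c ^+ k *
     \sum_(w in span bs) (\prod_(g <- gs) g w * \prod_(f <- fs) (c * f b + f w)) = 0.
Proof.
elim=> [|f fs IHf] gs k /=.
  move=> _ Hg Hs.
  under eq_bigr do under eq_bigr do rewrite big_nil mulr1.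
  rewrite -mulr_suml.
  have [Hk|Hk] := ltnP k (Q - 1); first by rewrite sumK // mul0r.
  by rewrite IH ?mulr0 //; move: Hs; rewrite mulSn; lia.
move=> [Hf Hfs] Hg Hs.
have -> : \sum_(c in KQ) c ^+ k *
     \sum_(w in span bs) (\prod_(g <- gs) g w * \prod_(f0 <- f :: fs) (c * f0 b + f0 w))
  = f b * (\sum_(c in KQ) c ^+ k.+1 *
     \sum_(w in span bs) (\prod_(g <- gs) g w * \prod_(f0 <- fs) (c * f0 b + f0 w)))
  + \sum_(c in KQ) c ^+ k *
     \sum_(w in span bs) (\prod_(g <- f :: gs) g w * \prod_(f0 <- fs) (c * f0 b + f0 w)).
  rewrite mulr_sumr -big_split; apply: eq_bigr => c _.
  rewrite !mulr_sumr -big_split; apply: eq_bigr => w _.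
  rewrite !big_cons exprS /=; ring.
rewrite IHf // ?mulr0 ?add0r; last by move: Hs => /=; lia.
by rewrite IHf //; move: Hs => /=; lia.
Qed.

Lemma vanish bs fs : indep bs -> alllin fs -> (size fs < size bs * (Q - 1))%N ->
  \sum_(g in span bs) \prod_(f <- fs) f g = 0.
Proof.
elim: bs fs => [|b bs IH] fs /=; first by rewrite mul0n.
case/andP => Hb Hi Hl Hs.
rewrite big_imset /=; last exact: span_inj.
have -> : \sum_(i in setX KQ (span bs)) \prod_(f <- fs) f (i.1 * b + i.2)
  = \sum_(c in KQ) \sum_(w in span bs) \prod_(f <- fs) f (c * b + w).
  by rewrite pair_big_dep; apply: eq_bigl => [[x y]] /=; rewrite in_setX.
have := @Hstep b bs (size bs) (fun gs Hg Hgs => IH gs Hi Hg Hgs) fs [::] 0 Hl I.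
rewrite /= add0n addn0 => /(_ Hs) H; apply: etrans H.
apply: eq_bigr => c Hc; rewrite expr0 mul1r; apply: eq_bigr => w _.
rewrite big_nil mul1r.
elim: fs Hl {Hs} => [|f fs IHf] /=; first by rewrite !big_nil.
case=> [[HfD HfM] Hfs]; rewrite !big_cons IHf // HfD HfM //.
Qed.


Lemma exists_basis (V : {set L}) d :
  (1 < Q)%N -> 0 \in V -> (forall v w, v \in V -> w \in V -> v + w \in V) ->
  (forall c v, c \in KQ -> v \in V -> c * v \in V) -> #|V| = (Q ^ d)%N ->
  exists bs, [/\ indep bs, size bs = d & span bs = V].
Proof.
move=> Q1 V0 VD VM Vc.
suff /(_ d (leqnn d)) [bs [Hi Hs Hsub]] : forall k, (k <= d)%N ->
    exists bs, [/\ indep bs, size bs = k & span bs \subset V].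
  exists bs; split => //; apply/eqP; rewrite eqEcard Hsub card_span // Hs Vc leqnn.
  done.
elim=> [|k IHk] Hk.
  by exists [::]; split => //=; rewrite sub1set.
have [bs [Hi Hs Hsub]] := IHk (ltnW Hk).
have : ~~ (V \subset span bs).
  apply/negP => /subset_leq_card; rewrite card_span // Hs Vc leq_exp2l //.
  by rewrite leqNgt Hk.
case/subsetPn => v Hv Hnv.
exists (v :: bs); split => /=; [by rewrite Hnv Hi | by rewrite Hs |].
apply/subsetP => y /span_cons [c [w [Hc Hw ->]]].
by apply: VD; [apply: VM | apply: (subsetP Hsub)].
Qed.

End Gen.

Lemma sumK_lemma (L : finFieldType) (Q : nat) (beta : L) :
  (0 < Q)%N -> (Q%:R : L) = 0 -> #|KQ L Q| = Q -> beta \in KQ L Q -> beta != 0 ->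
  (forall k, (0 < k < Q - 1)%N -> beta ^+ k != 1) ->
  forall k, (k < Q - 1)%N -> \sum_(c in KQ L Q) c ^+ k = 0.
Proof.
move=> Q0 QR cK bK b0 bk [|k] Hk.
  by under eq_bigr do rewrite expr0; rewrite sumr_const cK; exact: QR.
set S := \sum_(c in _) _.
have : S = beta ^+ k.+1 * S.
  rewrite {1}/S (reindex_onto (fun c => beta * c) (fun c => beta^-1 * c)) /=.
    rewrite /S mulr_sumr; apply: eq_big => [c|c _]; last by rewrite exprMn.
    rewrite mulrA mulVf // mul1r eqxx andbT.
    rewrite !inE exprMn; move: bK; rewrite inE => /eqP->.
    by rewrite (inj_eq (mulfI b0)).
  move=> c _; by rewrite mulrA mulfV // mul1r.
move/eqP; rewrite -subr_eq0 -{1}[S]mul1r -mulrBl mulf_eq0 subr_eq0 eq_sym.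
by rewrite (negPf (bk _ _)) //= => /eqP.
Qed.
Lemma arith q d X Y : (1 < q)%N ->
  (X + Y < 2*d*(q-1))%N || ((X + Y == 2*d*(q-1))%N && (X != Y)) ->
  (X + Y*q < d*(q*q-1))%N || (X*q + Y < d*(q*q-1))%N.
Proof.
move=> q1 H.
have -> : (q * q - 1 = (q - 1) * (q + 1))%N.
  by rewrite mulnBl mulnDr mul1n muln1 subnDA addnK.
set t := (q - 1)%N in H *.
have Eq : q = t.+1 by rewrite /t; lia.
rewrite Eq in q1 *; clear Eq.
case: (ltnP (X + Y * t.+1) (d * (t * (t.+1 + 1)))) => //= H1.
case: (ltnP (X * t.+1 + Y) (d * (t * (t.+1 + 1)))) => //= H2.
have H3 : ((2 * d * t) * (t + 2) <= (X + Y) * (t + 2))%N by nia.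
rewrite leq_pmul2r ?addn2 // in H3.
case/orP: H => [|/andP [/eqP H4 H5]]; first by rewrite ltnNge H3.
have H6 : (X * t <= Y * t)%N by nia.
have H7 : (Y * t <= X * t)%N by nia.
rewrite leq_pmul2r ?(ltn_trans _ q1) // in H6.
rewrite leq_pmul2r ?(ltn_trans _ q1) // in H7.
by move: H5; rewrite eqn_leq H6 H7.
Qed.

Lemma digits_sum q n u : (0 < q)%N -> (u < q ^ n)%N ->
  u = (\sum_(i < n) qdigit q u i * q ^ i)%N.
Proof.
move=> q0; elim: n u => [|n IH] u Hu.
  by rewrite big_ord0; move: Hu; rewrite expn0; lia.
rewrite big_ord_recl /= expn0 muln1.
have Hd : (u %/ q < q ^ n)%N by rewrite ltn_divLR // -expnSr.
rewrite {1}(divn_eq u q) (IH _ Hd) big_distrl /= addnC.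
congr (_ + _)%N.
  by rewrite /qdigit expn0 divn1.
apply: eq_bigr => i _; rewrite /qdigit /bump /= add1n expnS divnMA.
by rewrite mulnAC -mulnA mulnC.
Qed.

Fixpoint mkfs {L : finFieldType} (a : nat -> nat) (h : nat -> L -> L) k : seq (L -> L) :=
  if k is k'.+1 then mkfs a h k' ++ nseq (a k') (h k') else [::].

Lemma size_mkfs (L : finFieldType) a (h : nat -> L -> L) k :
  size (mkfs a h k) = (\sum_(i < k) a i)%N.
Proof.
elim: k => [|k IH] /=; first by rewrite big_ord0.
by rewrite size_cat size_nseq IH big_ord_recr.
Qed.

Lemma prod_mkfs (L : finFieldType) a (h : nat -> L -> L) k g :
  \prod_(f <- mkfs a h k) f g = \prod_(i < k) (h i g) ^+ (a i).
Proof.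
elim: k => [|k IH] /=; first by rewrite big_ord0 big_nil.
rewrite big_cat IH big_ord_recr /=; congr (_ * _).
by elim: (a k) => [|e IHe] /=; rewrite ?big_nil ?expr0 // big_cons IHe exprS.
Qed.

Lemma alllin_cat (L : finFieldType) Q (xs ys : seq (L -> L)) :
  alllin L Q xs -> alllin L Q ys -> alllin L Q (xs ++ ys).
Proof. by elim: xs => [|x xs IH] //= [Hx Hxs] Hy; split => //; apply: IH. Qed.

Lemma alllin_mkfs (L : finFieldType) Q a (h : nat -> L -> L) k :
  (forall i, linK L Q (h i)) -> alllin L Q (mkfs a h k).
Proof.
move=> Hh; elim: k => [|k IH] //=; apply: alllin_cat => //.
by elim: (a k) => [|e IHe] //=.
Qed.

Lemma linK_pow (L : finFieldType) p Q j : p \in [pchar L] -> [pchar L].-nat Q ->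
  (0 < Q)%N -> linK L Q (fun g : L => g ^+ (Q ^ j)).
Proof.
move=> Hp HQ Q0; split => [x y|c x].
  by rewrite exprDn_pchar // pnatX HQ.
rewrite inE => /eqP Hc; rewrite exprMn; congr (_ * _).
elim: j => [|j IH]; first by rewrite expn0 expr1.
by rewrite expnS exprM Hc IH.
Qed.

Lemma modeq_eq N a b : (0 < a <= N)%N -> (0 < b <= N)%N -> a = b %[mod N] -> a = b.
Proof.
move=> /andP [a0 aN] /andP [b0 bN] E.
have Ha : (a %% N = if a == N then 0 else a)%N.
  by case: eqP => [->|/eqP H]; rewrite ?modnn // modn_small // ltn_neqAle H aN.
have Hb : (b %% N = if b == N then 0 else b)%N.
  by case: eqP => [->|/eqP H]; rewrite ?modnn // modn_small // ltn_neqAle H bN.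
move: E; rewrite Ha Hb.
case: eqP => [->|_]; case: eqP => [->|_] //; lia.
Qed.
Lemma dvd_pow_sub1 Q m : (0 < Q)%N -> (Q - 1 %| Q ^ m - 1)%N.
Proof.
move=> Q0; elim: m => [|m IH]; first by rewrite expn0 subnn dvdn0.
have X0 := expn_gt0 Q m; rewrite Q0 /= in X0.
have -> : (Q ^ m.+1 - 1 = Q * (Q ^ m - 1) + (Q - 1))%N.
  by rewrite expnS; move: X0; set X := (Q ^ m)%N; nia.
by rewrite dvdn_add // dvdn_mull.
Qed.

Lemma expr_sum (L : finFieldType) (g : L) n (F : 'I_n -> nat) :
  g ^+ (\sum_(i < n) F i)%N = \prod_(i < n) g ^+ (F i).
Proof. by apply: (big_morph (fun k : nat => g ^+ k) (exprD g) (expr0 g)). Qed.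

Lemma size_split q n u s : (s < 2)%N ->
  (\sum_(i < n) qdigit q u i * q ^ ((i + s) %% 2))%N =
  (if s == 0%N then Eq q n u + Oq q n u * q else Eq q n u * q + Oq q n u)%N.
Proof.
move=> s2; rewrite (bigID (fun i : 'I_n => odd i)) /Oq /Eq !big_distrl /= addnC.
case: s s2 => [|[|//]] _ /=.
  congr (_ + _)%N; apply: eq_bigr => i Hi; rewrite addn0 modn2.
    by rewrite (negPf Hi) muln1.
  by rewrite Hi expn1.
congr (_ + _)%N; apply: eq_bigr => i Hi; rewrite addn1 modn2 /=.
  by rewrite Hi expn1.
by rewrite Hi muln1.
Qed.

Lemma wt_split q n u : wtq q n u = (Eq q n u + Oq q n u)%N.
Proof. by rewrite /wtq (bigID (fun i : 'I_n => odd i)) addnC. Qed.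

Lemma sq_gt1 q : (1 < q)%N -> (1 < q ^ 2)%N.
Proof. by move=> h; rewrite -mulnn; nia. Qed.
Lemma predS_eq Q : (1 < Q)%N -> Q = (Q - 1).+1.
Proof. by lia. Qed.
Lemma pred_neq0 Q : (1 < Q)%N -> (Q - 1 == 0)%N = false.
Proof. by lia. Qed.
Lemma divn2_eq k : k = (2 * (k %/ 2) + k %% 2)%N.
Proof. by have := divn_eq k 2; lia. Qed.
Lemma rho_pos m r q : (0 < m)%N -> (2 * r <= 2 * m - 1)%N -> (1 < q)%N ->
  (0 < 2 * (m - r) * (q - 1))%N.
Proof. by move=> *; rewrite !muln_gt0 /=; apply/andP; split; lia. Qed.
Lemma le_pred_lt a X : (0 < X)%N -> (a <= X - 1)%N -> (a < X)%N.
Proof. by lia. Qed.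

Lemma frob_sum (L : finFieldType) q (Fq : forall x y : L, (x + y) ^+ q = x ^+ q + y ^+ q)
  (q0 : (0 < q)%N) (I : finType) (P : pred I) (F : I -> L) :
  (\sum_(i | P i) F i) ^+ q = \sum_(i | P i) F i ^+ q.
Proof.
apply: (big_morph (fun x : L => x ^+ q) Fq).
by rewrite expr0n eqn0Ngt q0.
Qed.

Theorem lemma5p4 (p l m rho' : nat) (L : finFieldType) (alpha : L)
    (I : pred nat) (V : {set L}) (lambda : L) :
  prime p -> (0 < l)%N -> (0 < m)%N ->
  #|L| = ((p ^ l) ^ (2 * m))%N ->
  ((p ^ l) ^ (2 * m) - 1).-primitive_root alpha ->
  (2 * rho' <= 2 * m - 1)%N ->
  {subset I <= Mr (p ^ l) m (2 * rho' * (p ^ l - 1))} ->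
  0%N \in I ->
  Fq2_subspace (p ^ l) V ->
  #|V| = (((p ^ l) ^ 2) ^ (m - rho'))%N ->
  lambda ^+ (p ^ l) = lambda -> lambda != 0 ->
  in_code (p ^ l) (2 * m) m alpha (2 * rho' * (p ^ l - 1)) I
    (fun g => if (g \in V) && (g != 0) then lambda else 0).
Proof.
move=> Pp l0 m0 cardL prim Hrho HI I0 [V0 VD VM] cardV lamq lam0.
have Hch : p \in [pchar L].
  by apply: (@card_finPcharP _ p (l * (2 * m))) => //; rewrite expnM.
set q := (p ^ l)%N in cardL prim HI VM cardV lamq *.
have p1 : (1 < p)%N := prime_gt1 Pp.
have q1 : (1 < q)%N.
  by have := ltn_exp2l 0 l p1; rewrite expn0 l0 /=.
have q0 : (0 < q)%N by apply: ltnW.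
set Q := (q ^ 2)%N in VM cardV.
have Q1 : (1 < Q)%N by apply: sq_gt1.
have Q0 : (0 < Q)%N by apply: ltnW.
have HQn : [pchar L].-nat Q by rewrite /Q /q !pnatX (pnatE _ Pp) Hch.
have Hqn : [pchar L].-nat q by rewrite /q !pnatX (pnatE _ Pp) Hch.
have frobQ : forall x y : L, (x + y) ^+ Q = x ^+ Q + y ^+ Q.
  by move=> x y; rewrite exprDn_pchar.
have QR : (Q%:R : L) = 0.
  apply/eqP; rewrite -(dvdn_pcharf Hch) /Q dvdn_exp //.
  by rewrite /q dvdn_exp.
have qQ : (q ^ (2 * m) = Q ^ m)%N by rewrite /Q -expnM.
rewrite qQ in prim.
have dvdN := @dvd_pow_sub1 Q m Q0.
have primb := dvdn_prim_root prim dvdN.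
set beta := alpha ^+ _ in primb.
have bK : beta ^+ Q = beta.
  rewrite {1}(@predS_eq Q Q1).
  by rewrite exprS prim_expr_order // mulr1.
have b0 : beta != 0.
  apply/eqP => b0; have := prim_expr_order primb; rewrite b0 expr0n.
  rewrite pred_neq0 //.
  by move/eqP; rewrite eq_sym oner_eq0.
have bk : forall k, (0 < k < Q - 1)%N -> beta ^+ k != 1.
  move=> k /andP [k0 kQ]; rewrite -(prim_order_dvd primb).
  by apply/negP => /(dvdn_leq k0); rewrite leqNgt kQ.
have cardK : #|KQ L Q| = Q.
  have EK : KQ L Q = 0 |: [set beta ^+ i | i : 'I_(Q-1)].
    apply/setP => c; rewrite !inE.
    have [->|c0] := eqVneq c 0.
      rewrite expr0n; rewrite eqn0Ngt Q0.
      by rewrite eqxx.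
    rewrite /=; apply/eqP/imsetP => [Hc|[i _ ->]]; last by rewrite exprAC bK.
    have : c ^+ (Q - 1) = 1.
      by apply: (mulIf c0); rewrite mul1r -exprSr subn1 prednK.
    by case/(prim_rootP primb) => i ->; exists i.
  rewrite EK cardsU1 card_imset ?card_ord.
    have -> : (0 \notin [set beta ^+ i | i : 'I_(Q-1)]).
      by apply/imsetP => [[i _ /esym/eqP]]; rewrite expf_eq0 (negPf b0) andbF.
    by rewrite add1n subn1 prednK.
  move=> i j /eqP; rewrite (eq_prim_root_expr primb) !modn_small //.
  by move=> /eqP /val_inj.
have bKin : beta \in KQ L Q by rewrite inE bK.
have sumK := @sumK_lemma L Q beta Q0 QR cardK bKin b0 bk.
have VM' : forall c v, c \in KQ L Q -> v \in V -> c * v \in V.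
  by move=> c v; rewrite inE => /eqP; exact: VM.
have [bs [Hi Hs Hspan]] := @exists_basis L Q Q0 frobQ cardK V (m - rho') Q1 V0 VD VM' cardV.
have Svan : forall u s, (s < 2)%N -> (u < q ^ (2 * m))%N ->
    (\sum_(i < 2 * m) qdigit q u i * q ^ ((i + s) %% 2) < (m - rho') * (Q - 1))%N ->
    \sum_(g in V) g ^+ (u * q ^ s) = 0.
  move=> u s s2 uN Hsz.
  rewrite -Hspan.
  have := @vanish L Q Q0 frobQ cardK sumK bs
    (mkfs (fun i => qdigit q u i * q ^ ((i + s) %% 2))%N
          (fun i (g : L) => g ^+ (Q ^ ((i + s) %/ 2))) (2 * m)) Hi
    (@alllin_mkfs L Q _ _ (2 * m) (fun i => @linK_pow L p Q ((i + s) %/ 2) Hch HQn Q0)).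
  rewrite size_mkfs Hs => /(_ Hsz); apply: etrans; apply: eq_bigr => g _.
  rewrite prod_mkfs {1}(@digits_sum q (2 * m) u q0 uN) big_distrl /= expr_sum.
  apply: eq_bigr => i _; rewrite -exprM; congr (g ^+ _).
  rewrite /Q -expnM mulnCA -expnD -mulnA -expnD; congr (_ * q ^ _)%N.
  exact: divn2_eq.
have qn0 : (q == 0)%N = false by rewrite eqn0Ngt q0.
have Fq : forall x y : L, (x + y) ^+ q = x ^+ q + y ^+ q.
  by move=> x y; rewrite exprDn_pchar.
have T0 : (0 < 2 * (m - rho') * (q - 1))%N.
  exact: rho_pos.
have ET : (2 * m * (q - 1) - 2 * rho' * (q - 1) = 2 * (m - rho') * (q - 1))%N.
  by rewrite -mulnBl -mulnBr.
split.
  by move=> g _; case: ifP => _ //; rewrite expr0n qn0.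
move=> u /andP [u1 uN] HZ.
rewrite qQ in uN.
have uN' : (u < q ^ (2 * m))%N by rewrite qQ; apply: le_pred_lt uN; rewrite expn_gt0 Q0.
have uequ : forall u' : nat, (0 < u')%N -> (u' <= Q ^ m - 1)%N -> alpha ^+ u' = alpha ^+ u -> u' = u.
  move=> u' u'0 u'N /eqP; rewrite (eq_prim_root_expr prim) => /eqP.
  by apply: modeq_eq; apply/andP; split.
have Cond : (Eq q (2 * m) u + Oq q (2 * m) u < 2 * (m - rho') * (q - 1))%N ||
  ((Eq q (2 * m) u + Oq q (2 * m) u == 2 * (m - rho') * (q - 1))%N &&
   (Eq q (2 * m) u != Oq q (2 * m) u)).
  rewrite -wt_split.
  case/orP: HZ => [/existsP [u' /and4P [u'0 u'N Hwt /eqP Ha]] |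
     /existsP [k /and3P [Hk HkI /existsP [u' /and4P [u'N Hwt HOE /eqP Ha]]]]].
    have u'N2 : (u' <= Q ^ m - 1)%N by rewrite -qQ.
    have Eu := uequ u' u'0 u'N2 Ha; rewrite Eu in Hwt.
    by rewrite ET in Hwt; apply/orP; left; apply: le_pred_lt Hwt.
  have u'N2 : (u' <= Q ^ m - 1)%N by rewrite -qQ.
  have u'0 : (0 < u')%N.
    rewrite lt0n; apply/negP => /eqP u'0; move: Hwt; rewrite u'0 ET.
    rewrite /wtq big1 => [|i _]; first by rewrite eq_sym eqn0Ngt T0.
    by rewrite /qdigit div0n mod0n.
  have Eu := uequ u' u'0 u'N2 Ha; rewrite Eu in Hwt HOE.
  rewrite ET in Hwt; move/eqP: Hwt => Hwt; rewrite Hwt ltnn eqxx /=.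
  apply/negP => /eqP HEO; move: HOE; rewrite HEO /absdiff subnn addn0 => /eqP k0.
  by move: HkI; rewrite -k0 I0.
suff S0 : \sum_(g in V) g ^+ u = 0.
  transitivity (lambda * \sum_(g in V) g ^+ u); last by rewrite S0 mulr0.
  rewrite mulr_sumr big_mkcond [RHS]big_mkcond /=; apply: eq_bigr => g _.
  have [->|g0] := eqVneq g 0.
    rewrite /= expr0n; rewrite eqn0Ngt u1.
    by rewrite mulr0; case: (_ \in V).
  by rewrite /= andbT; case: (g \in V) => //; rewrite mul0r.
have Hq2 : (Q - 1 = q * q - 1)%N by rewrite /Q mulnn.
case/orP: (@arith q (m - rho') _ _ q1 Cond) => H.
  have := @Svan u 0 isT uN'; rewrite expn0 muln1; apply.
  by rewrite size_split //; exact: H.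
have := @Svan u 1 isT uN'; rewrite size_split // => /(_ H).
move=> H1; apply/eqP.
suff : (\sum_(g in V) g ^+ u) ^+ q == 0 by rewrite expf_eq0 q0.
rewrite (@frob_sum L q Fq q0); apply/eqP; apply: etrans H1; rewrite expn1.
by apply: eq_bigr => g _; rewrite exprM.
Qed.
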